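(* Let $G=(g_1,\dots,g_k)\in\mathbb{N}_0^k$ with $g_1>0$, $\gcd(G)=1$ and $c(G)=(c_2,\dots,c_k)$, and let $z_1=1$. Then $G$ is telescopic if and only if for each $i=2,\dots,k$ there exists $z_i\in\mathbb{N}_0$ such that $g_i=z_iC_{i,k}$, $\gcd(z_i,c_i)=1$, and $z_i\in\langle z_jC_{j,i-1} : 1\le j<i\rangle$.
   Context: $\langle A\rangle$ is the set of $\mathbb{N}_0$-linear combinations of the elements of $A$. $G_i=(g_1,\dots,g_i)$, $d_i=\gcd(G_i)$, $c_j=d_{j-1}/d_j$ for $2\le j\le k$; $G$ is telescopic if $c_jg_j\in\langle G_{j-1}\rangle$ for all $2\le j\le k$. $C_{m,n}=\prod_{j=m+1}^n c_j$, with the empty product (when $n\le m$) equal to $1$. *)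

(* Defs.v *)
(* G = (g_1,...,g_k) is encoded as g : nat -> nat, using only
   the values g 1, ..., g k (g 0 and g i for i > k are irrelevant). *)
From mathcomp Require Import all_boot.
Set Implicit Arguments. Unset Strict Implicit. Unset Printing Implicit Defensive.

(* d_i = gcd(g_1, ..., g_i)  (d_0 = gcd of empty family = 0) *)
Definition dgcd (g : nat -> nat) (i : nat) : nat :=
  \big[gcdn/0]_(1 <= j < i.+1) g j.

Definition cc (g : nat -> nat) (j : nat) : nat := dgcd g j.-1 %/ dgcd g j.

Definition CC (g : nat -> nat) (m n : nat) : nat :=
  \prod_(m.+1 <= j < n.+1) cc g j.

Definition in_semigroup (h : nat -> nat) (i : nat) (x : nat) : Prop :=
  exists a : nat -> nat, x = \sum_(1 <= j < i) a j * h j.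

Definition telescopic (k : nat) (g : nat -> nat) : Prop :=
  forall j, 2 <= j <= k -> in_semigroup g j (cc g j * g j).

(* Main.v *)
Require Import Defs.
From mathcomp Require Import all_boot.

Lemma dgcdS g i : dgcd g i.+1 = gcdn (dgcd g i) (g i.+1).
Proof. by rewrite /dgcd big_nat_recr. Qed.

Lemma dgcd1 g : dgcd g 1 = g 1.
Proof. by rewrite dgcdS /dgcd big_geq // gcd0n. Qed.

Lemma dgcd_gt0 g i : 0 < g 1 -> 0 < i -> 0 < dgcd g i.
Proof.
move=> g1; elim: i => // [[|i]] IH _; first by rewrite dgcd1.
by rewrite dgcdS gcdn_gt0 IH.
Qed.

Lemma dgcd_dvd g i : 0 < i -> dgcd g i %| g i.
Proof. by case: i => // i _; rewrite dgcdS dvdn_gcdr. Qed.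

Lemma cc_mul g i : 0 < i -> cc g i * dgcd g i = dgcd g i.-1.
Proof. by case: i => // i _; rewrite /cc /= divnK // dgcdS dvdn_gcdl. Qed.

Lemma CC_mul g m n : 0 < m -> m <= n -> CC g m n * dgcd g n = dgcd g m.
Proof.
move=> m0; elim: n => [|n IH]; first by rewrite leqn0 => /eqP E; rewrite E in m0.
rewrite leq_eqVlt => /orP [/eqP <-|].
  by rewrite /CC big_geq // mul1n.
rewrite ltnS => mn; rewrite /CC big_nat_recr //= -mulnA.
by rewrite (@cc_mul g n.+1 (ltn0Sn n)) -IH.
Qed.

Lemma coprime_z g i : 0 < g 1 -> 1 < i ->
  coprime (g i %/ dgcd g i) (cc g i).
Proof.
move=> g1; case: i => // i; rewrite ltnS => i0.
have dp := dgcd_gt0 g _ g1 (ltn0Sn i).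
rewrite /coprime /cc /= -(eqn_pmul2r dp) mul1n muln_gcdl.
rewrite divnK; last exact: dgcd_dvd.
rewrite divnK; last by rewrite dgcdS dvdn_gcdl.
by rewrite dgcdS gcdnC.
Qed.

Lemma key g k z i a : 0 < g 1 -> 2 <= i <= k ->
  (forall j, 1 <= j <= i -> z j * dgcd g j = g j) ->
  (cc g i * g i = \sum_(1 <= j < i) a j * g j) <->
  (z i = \sum_(1 <= j < i) a j * (z j * CC g j i.-1)).
Proof.
move=> g1 /andP [i2 ik] zP.
have i0 : 0 < i by apply: leq_trans i2.
have ip : 0 < i.-1 by rewrite -ltnS prednK.
have dp := dgcd_gt0 g i.-1 g1 ip.
have E1 : z i * dgcd g i.-1 = cc g i * g i.
  by rewrite -(cc_mul g i i0) mulnCA zP // i0 leqnn.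
have E2 : (\sum_(1 <= j < i) a j * (z j * CC g j i.-1)) * dgcd g i.-1
          = \sum_(1 <= j < i) a j * g j.
  rewrite big_distrl /=; apply: eq_big_nat => j /andP [j1 ji].
  rewrite -!mulnA CC_mul //; last by rewrite -ltnS prednK.
  by rewrite zP // j1 ltnW.
split=> H.
  by apply/eqP; rewrite -(eqn_pmul2r dp) E1 E2 H.
by rewrite -E1 -E2 H.
Qed.

Theorem mainTheorem8 (k : nat) (g : nat -> nat) :
  1 <= k -> 0 < g 1 -> dgcd g k = 1 ->
  telescopic k g <->
  exists z : nat -> nat,
    z 1 = 1 /\
    forall i, 2 <= i <= k ->
      [/\ g i = z i * CC g i k,
          coprime (z i) (cc g i)
        & in_semigroup (fun j => z j * CC g j i.-1) i (z i)].
Proof.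
move=> k1 g1 dk.
have CCk j : 1 <= j <= k -> CC g j k = dgcd g j.
  by case/andP=> j1 jk; rewrite -(CC_mul g j k j1 jk) dk muln1.
split.
  move=> T; exists (fun j => g j %/ dgcd g j); split.
    by rewrite dgcd1 divnn g1.
  move=> i /andP [i2 ik].
  have i1 : 1 <= i by apply: leq_trans i2.
  split.
  - by rewrite CCk ?i1 // divnK // dgcd_dvd.
  - exact: coprime_z.
  - have [a Ha] := T i (introT andP (conj i2 ik)).
    exists a; apply/(@key g k _ i a g1) => //; first by rewrite i2.
    move=> j /andP [j1 ji]; exact: divnK (dgcd_dvd g j j1).
move=> [z [z1 Hz]] i /andP [i2 ik].
have zP : forall j, 1 <= j <= k -> z j * dgcd g j = g j.
  move=> j /andP [j1 jk]; case: (ltngtP j 1) => [|jl|->].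
  - by rewrite ltnNge j1.
  - by case: (Hz j (introT andP (conj jl jk))) => -> _ _; rewrite CCk // j1.
  - by rewrite z1 dgcd1 mul1n.
case: (Hz i (introT andP (conj i2 ik))) => _ _ [a Ha].
exists a; apply/(@key g k z i a g1) => //; first by rewrite i2.
move=> j /andP [j1 ji]; apply: zP; rewrite j1; exact: leq_trans ji ik.
Qed.
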